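(* Let $X$ be a $T_0$ space that is $\operatorname{Irr}$-continuous and $k$-bounded sober. Then $\ll_{\operatorname{Irr}}$ has the interpolation property: whenever $z\ll_{\operatorname{Irr}} x$, there exists $y\in X$ with $z\ll_{\operatorname{Irr}} y\ll_{\operatorname{Irr}} x$.
   Context: For a topological space $X$, a nonempty subset $E$ is irreducible if whenever $E\subseteq A_1\cup A_2$ with $A_1,A_2$ closed, $E\subseteq A_1$ or $E\subseteq A_2$. The specialisation order is $x\le y$ iff $x\in\operatorname{cl}(\{y\})$; $\uparrow x=\{z:z\ge x\}$; $\bigvee$ denotes supremum in this order. $\operatorname{Irr}^+(X)$ is the set of irreducible subsets whose supremum exists. $X$ is $k$-bounded sober if every closed set $F\in\operatorname{Irr}^+(X)$ is the closure of a unique singleton. $x\ll_{\operatorname{Irr}} y$ iff for every $E\in\operatorname{Irr}^+(X)$ with $\bigvee E\ge y$, $E\cap\uparrow x\ne\emptyset$; $\twoheaddownarrow_{\operatorname{Irr}} x=\{y:y\ll_{\operatorname{Irr}} x\}$. $X$ is $\operatorname{Irr}$-continuous if for every $x$, $\twoheaddownarrow_{\operatorname{Irr}} x$ is irreducible and $x=\bigvee\twoheaddownarrow_{\operatorname{Irr}} x$. *)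

(* Defs.v *)
From HB Require Import structures.
From mathcomp Require Import all_boot all_order.
From mathcomp Require Import all_classical all_reals all_analysis.
Set Implicit Arguments. Unset Strict Implicit. Unset Printing Implicit Defensive.
Local Open Scope classical_set_scope.

Section IrrDefs.
Variable X : topologicalType.

Definition irreducible (E : set X) : Prop :=
  E !=set0 /\
  forall A1 A2 : set X, closed A1 -> closed A2 -> E `<=` A1 `|` A2 ->
    E `<=` A1 \/ E `<=` A2.

Definition spec_le (x y : X) : Prop := closure [set y] x.

Definition upset (x : X) : set X := [set z | spec_le x z].

Definition is_sup (E : set X) (s : X) : Prop :=
  (forall e, E e -> spec_le e s) /\
  (forall u, (forall e, E e -> spec_le e u) -> spec_le s u).

Definition IrrPlus (E : set X) : Prop := irreducible E /\ exists s, is_sup E s.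

Definition k_bounded_sober : Prop :=
  forall F : set X, closed F -> IrrPlus F -> exists! x : X, F = closure [set x].

Definition way_below_Irr (x y : X) : Prop :=
  forall E : set X, IrrPlus E -> forall s, is_sup E s -> spec_le y s ->
    E `&` upset x !=set0.

Definition wayb_Irr (x : X) : set X := [set y | way_below_Irr y x].

Definition Irr_continuous : Prop :=
  forall x : X, irreducible (wayb_Irr x) /\ is_sup (wayb_Irr x) x.

End IrrDefs.

(* Main.v *)
Require Import Defs.
From mathcomp Require Import all_boot all_order.
From mathcomp Require Import all_classical all_reals all_analysis.
Local Open Scope classical_set_scope.

Section Aux.
Variable X : topologicalType.

Lemma clmin (A S : set X) : closed A -> S `<=` A -> closure S `<=` A.
Proof. move=> cA SA; rewrite (closure_id A).1 //; exact: closureS. Qed.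

Lemma spec_refl (x : X) : spec_le x x.
Proof. exact: subset_closure. Qed.

Lemma spec_trans (a b c : X) : spec_le a b -> spec_le b c -> spec_le a c.
Proof.
move=> ab bc; apply: (@clmin _ [set b] (@closed_closure _ [set c])) ab.
by move=> y ->.
Qed.

Lemma closed_down (A : set X) a b : closed A -> spec_le a b -> A b -> A a.
Proof. move=> cA ab Ab; apply: (@clmin A [set b] cA) ab; by move=> y ->. Qed.

Lemma wb_le (x : X) : Irr_continuous X -> forall w, way_below_Irr w x -> spec_le w x.
Proof. by move=> /(_ x) [_ [H _]] w; apply: H. Qed.

Lemma wb_mono (z w y : X) : spec_le z w -> way_below_Irr w y -> way_below_Irr z y.
Proof.
move=> zw wy E EP s Es ys; have [e [Ee we]] := wy E EP s Es ys.
exists e; split => //; exact: spec_trans zw we.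
Qed.

Lemma in_closure_wb (A : set X) y : Irr_continuous X -> k_bounded_sober X ->
  closed A -> wayb_Irr y `<=` A -> A y.
Proof.
move=> ic ks cA sub; have [irr [ub lub]] := ic y.
set F := closure (wayb_Irr y).
have cF : closed F by exact: closed_closure.
have IF : IrrPlus F.
  split; last first.
    exists y; split.
      apply: clmin; first exact: closed_closure.
      by move=> e /ub.
    by move=> u H; apply: lub => e We; apply: H; exact: subset_closure.
  case: irr => [[e We] irr]; split; first by exists e; exact: subset_closure.
  move=> A1 A2 c1 c2 FA.
  have : wayb_Irr y `<=` A1 `|` A2 by move=> t Wt; apply: FA; exact: subset_closure.
  case/(irr _ _ c1 c2) => H; [left|right]; exact: clmin.
have [c [Fc _]] := ks F cF IF.
have yc : spec_le y c.
  apply: lub => e We; rewrite /spec_le -Fc; exact: subset_closure.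
have : F y by rewrite Fc.
by apply: clmin.
Qed.

End Aux.
Arguments wb_le {X x} ic {w}.
Arguments in_closure_wb {X A y}.
Arguments wb_mono {X z w y}.

Theorem theorem3p5 (X : topologicalType) :
  kolmogorov_space X -> Irr_continuous X -> k_bounded_sober X ->
  forall z x : X, way_below_Irr z x ->
    exists y : X, way_below_Irr z y /\ way_below_Irr y x.
Proof.
move=> _ ic ks z x zx.
pose E := [set w : X | exists y, way_below_Irr w y /\ way_below_Irr y x].
have [[[y0 Wy0] irrx] [ubx lubx]] := ic x.
have EP : IrrPlus E.
  split; last first.
    exists x; split.
      move=> w [y [wy yx]]; apply: spec_trans (wb_le ic wy) (wb_le ic yx).
    move=> u H; apply: lubx => y Wy.
    have [_ [_ luby]] := ic y.
    by apply: luby => w Ww; apply: H; exists y.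
  split.
    have [[[w Ww] _] _] := ic y0.
    by exists w; exists y0.
  move=> A1 A2 c1 c2 EA.
  have : wayb_Irr x `<=` A1 `|` A2.
    move=> y Wy.
    have [[_ irry] _] := ic y.
    have : wayb_Irr y `<=` A1 `|` A2 by move=> w Ww; apply: EA; exists y.
    case/(irry _ _ c1 c2) => H; [left|right]; exact: (in_closure_wb ic ks).
  case/(irrx _ _ c1 c2) => H; [left|right] => w [y [wy yx]];
    apply: closed_down (wb_le ic wy) (H y yx) => //.
have Esup : is_sup E x.
  split.
    move=> w [y [wy yx]]; apply: spec_trans (wb_le ic wy) (wb_le ic yx).
  move=> u H; apply: lubx => y Wy.
  have [_ [_ luby]] := ic y.
  by apply: luby => w Ww; apply: H; exists y.
have [w [[y [wy yx]] zw]] := zx E EP x Esup (@spec_refl X x).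
exists y; split; [exact: (wb_mono zw wy) | exact: yx].
Qed.
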